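(* Let $(K(n,m),{\bf p},{\bf q})$ be a complete bipartite framework in $\mathbb R^d$ whose configuration $({\bf p},{\bf q})$ has affine span of dimension at most $n+m-2$. If ${\bf p}$ and ${\bf q}$ are strictly separated by a quadric, then $(K(n,m),{\bf p},{\bf q})$ is not universally rigid.
   Context: A complete bipartite framework $(K(n,m),{\bf p},{\bf q})$ in $\mathbb R^d$ consists of points ${\bf p}=({\bf p}_1,\dots,{\bf p}_n)$ and ${\bf q}=({\bf q}_1,\dots,{\bf q}_m)$ in $\mathbb R^d$ (the two vertex classes), with a bar joining ${\bf p}_i$ and ${\bf q}_j$ for every $i,j$ and no other bars. A framework $(G,{\bf p})$ (graph $G$ on vertices $1,\dots,N$, points ${\bf p}_i\in\mathbb R^d$) is universally rigid if for every $D$ and every configuration ${\bf p}'$ in $\mathbb R^D$ with $|{\bf p}'_i-{\bf p}'_j|=|{\bf p}_i-{\bf p}_j|$ for all edges $\{i,j\}$ of $G$, one has $|{\bf p}'_i-{\bf p}'_j|=|{\bf p}_i-{\bf p}_j|$ for all pairs $i,j$. For ${\bf x}\in\mathbb R^d$ let $\hat{\bf x}\in\mathbb R^{d+1}$ be ${\bf x}$ with a $1$ appended as last coordinate. ${\bf p}$ and ${\bf q}$ are strictly separated by a quadric if there is a symmetric $(d+1)\times(d+1)$ real matrix $A$ with $\hat{\bf q}_j^tA\hat{\bf q}_j<0<\hat{\bf p}_i^tA\hat{\bf p}_i$ for all $i=1,\dots,n$, $j=1,\dots,m$. *)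

(* Defs.v *)
From Stdlib Require Import Reals Arith.
Open Scope R_scope.

(* A point of R^d is a function nat -> R; only coordinates 0..d-1 matter.
   A configuration of N points is a function nat -> (nat -> R); only
   indices 0..N-1 matter. *)

Fixpoint sumR (k : nat) (f : nat -> R) : R :=
  match k with
  | O => 0
  | S k' => sumR k' f + f k'
  end.

Definition dist2 (d : nat) (x y : nat -> R) : R :=
  sumR d (fun t => (x t - y t) * (x t - y t)).

Definition universally_rigid (d N : nat) (E : nat -> nat -> Prop)
    (x : nat -> nat -> R) : Prop :=
  forall (D : nat) (x' : nat -> nat -> R),
    (forall i j, (i < N)%nat -> (j < N)%nat -> E i j ->
       dist2 D (x' i) (x' j) = dist2 d (x i) (x j)) ->
    forall i j, (i < N)%nat -> (j < N)%nat ->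
       dist2 D (x' i) (x' j) = dist2 d (x i) (x j).

Definition Knm_edge (n m : nat) (i j : nat) : Prop :=
  ((i < n)%nat /\ (n <= j < n + m)%nat) \/ ((j < n)%nat /\ (n <= i < n + m)%nat).

Definition join_config (n : nat) (p q : nat -> nat -> R) : nat -> nat -> R :=
  fun i => if (i <? n)%nat then p i else q (i - n)%nat.

Definition bipartite_universally_rigid (d n m : nat) (p q : nat -> nat -> R) : Prop :=
  universally_rigid d (n + m) (Knm_edge n m) (join_config n p q).

Definition affine_span_dim_le (d N : nat) (x : nat -> nat -> R) (k : nat) : Prop :=
  exists (c : nat -> R) (u : nat -> nat -> R),
    forall v, (v < N)%nat ->
      exists a : nat -> R,
        forall t, (t < d)%nat -> x v t = c t + sumR k (fun j => a j * u j t).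

Definition hat (d : nat) (x : nat -> R) : nat -> R :=
  fun t => if (t <? d)%nat then x t else 1.

Definition qform (d : nat) (A : nat -> nat -> R) (y : nat -> R) : R :=
  sumR (S d) (fun a => sumR (S d) (fun b => y a * A a b * y b)).

Definition strictly_separated_by_quadric (d n m : nat) (p q : nat -> nat -> R) : Prop :=
  exists A : nat -> nat -> R,
    (forall a b, (a <= d)%nat -> (b <= d)%nat -> A a b = A b a) /\
    (forall i, (i < n)%nat -> 0 < qform d A (hat d (p i))) /\
    (forall j, (j < m)%nat -> qform d A (hat d (q j)) < 0).

(* Main.v *)
Require Import Defs.
From Stdlib Require Import Reals Arith Lia Lra Psatz.
Open Scope R_scope.

Lemma sumR_ext k f g : (forall t, (t < k)%nat -> f t = g t) -> sumR k f = sumR k g.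
Proof.
  induction k; simpl; intros H; auto.
  rewrite IHk by (intros; apply H; lia). rewrite H by lia. reflexivity.
Qed.

Lemma sumR_plus k f g : sumR k (fun t => f t + g t) = sumR k f + sumR k g.
Proof. induction k; simpl; [lra|rewrite IHk; lra]. Qed.

Lemma sumR_scal k c f : sumR k (fun t => c * f t) = c * sumR k f.
Proof. induction k; simpl; [lra|rewrite IHk; lra]. Qed.

Lemma sumR_swap k l F :
  sumR k (fun a => sumR l (fun b => F a b)) = sumR l (fun b => sumR k (fun a => F a b)).
Proof.
  induction k; simpl.
  - induction l; simpl; [lra|rewrite <- IHl; lra].
  - rewrite IHk. rewrite <- sumR_plus. reflexivity.
Qed.

Lemma sumR_split a b f : sumR (a + b) f = sumR a f + sumR b (fun t => f (a + t)%nat).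
Proof.
  induction b; simpl.
  - rewrite Nat.add_0_r. lra.
  - rewrite Nat.add_succ_r. simpl. rewrite IHb. lra.
Qed.

Lemma sumR_ind1 K c r : sumR K (fun s => if s =? c then r else 0) = if c <? K then r else 0.
Proof.
  induction K; simpl.
  - destruct c; reflexivity.
  - rewrite IHK. destruct (K =? c) eqn:E1.
    + apply Nat.eqb_eq in E1. subst.
      rewrite (proj2 (Nat.ltb_ge c c)) by lia. rewrite (proj2 (Nat.ltb_lt c (S c))) by lia. lra.
    + apply Nat.eqb_neq in E1.
      destruct (c <? K) eqn:E2.
      * apply Nat.ltb_lt in E2. rewrite (proj2 (Nat.ltb_lt c (S K))) by lia. lra.
      * apply Nat.ltb_ge in E2. rewrite (proj2 (Nat.ltb_ge c (S K))) by lia. lra.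
Qed.

Lemma sumR_ind2 K c1 c2 a b : (c1 < K)%nat -> (c2 < K)%nat ->
  sumR K (fun s => ((if s =? c1 then a else 0) - (if s =? c2 then b else 0)) *
                   ((if s =? c1 then a else 0) - (if s =? c2 then b else 0)))
  = if c1 =? c2 then (a - b) * (a - b) else a * a + b * b.
Proof.
  intros H1 H2.
  rewrite (sumR_ext K _ (fun s => ((if s =? c1 then a*a else 0) + (if s =? c2 then b*b else 0))
      + (if s =? c1 then (if c1 =? c2 then -2*a*b else 0) else 0))).
  2:{ intros t _. destruct (Nat.eqb_spec t c1); destruct (Nat.eqb_spec t c2);
      destruct (Nat.eqb_spec c1 c2); subst; try lia; ring. }
  rewrite !sumR_plus, !sumR_ind1.
  rewrite (proj2 (Nat.ltb_lt c1 K)) by lia. rewrite (proj2 (Nat.ltb_lt c2 K)) by lia.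
  destruct (c1 =? c2); ring.
Qed.

Lemma dist2_sym d x y : dist2 d x y = dist2 d y x.
Proof. unfold dist2. apply sumR_ext. intros. ring. Qed.

Lemma sumR_nonneg k f : (forall t, (t < k)%nat -> 0 <= f t) -> 0 <= sumR k f.
Proof.
  induction k; simpl; intros H; [lra|]. 
  assert (0 <= sumR k f) by (apply IHk; intros; apply H; lia).
  assert (0 <= f k) by (apply H; lia). lra.
Qed.

Lemma block_ind k (H K U V : nat -> R) l :
  sumR k (fun a => (H a - l*U a - (K a + l*V a)) * (H a - l*U a - (K a + l*V a)))
  + sumR k (fun a => (l*U a - l*V a) * (l*U a - l*V a))
  + 2*l*(sumR k (fun a => H a * U a) - l*sumR k (fun a => U a * U a))
  + 2*l*(- sumR k (fun a => K a * V a) - l*sumR k (fun a => V a * V a))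
  = sumR k (fun a => (H a - K a) * (H a - K a))
    - 2*l*(sumR k (fun a => H a * V a) - sumR k (fun a => K a * U a)).
Proof. induction k; simpl; [ring| lra]. Qed.

Lemma bilin_sym d (A : nat -> nat -> R) H K :
  (forall a b, (a <= d)%nat -> (b <= d)%nat -> A a b = A b a) ->
  sumR (S d) (fun a => H a * sumR (S d) (fun b => A a b * K b))
  = sumR (S d) (fun a => K a * sumR (S d) (fun b => A a b * H b)).
Proof.
  intros Hs.
  rewrite (sumR_ext _ _ (fun a => sumR (S d) (fun b => H a * A a b * K b))).
  2:{ intros. rewrite <- sumR_scal. apply sumR_ext. intros; ring. }
  rewrite sumR_swap. apply sumR_ext. intros b Hb.
  rewrite <- sumR_scal. apply sumR_ext. intros a Ha. rewrite (Hs a b) by lia. ring.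
Qed.

Lemma qform_U d A H :
  qform d A H = sumR (S d) (fun a => H a * sumR (S d) (fun b => A a b * H b)).
Proof.
  unfold qform. apply sumR_ext. intros. rewrite <- sumR_scal. apply sumR_ext. intros; ring.
Qed.

Lemma lam_exists N (f g : nat -> R) :
  (forall v, (v < N)%nat -> 0 < f v) -> (forall v, (v < N)%nat -> 0 <= g v) ->
  exists l, 0 < l /\ forall v, (v < N)%nat -> l * g v < f v.
Proof.
  induction N; intros Hf Hg.
  - exists 1. split; [lra|intros; lia].
  - destruct IHN as [l0 [Hl0 Hl]]; try (intros; apply Hf || apply Hg; lia).
    assert (HfN : 0 < f N) by (apply Hf; lia).
    assert (HgN : 0 <= g N) by (apply Hg; lia).
    set (l1 := f N / (g N + 1)).
    assert (Hl1 : 0 < l1) by (unfold l1; apply Rdiv_lt_0_compat; lra).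
    exists (Rmin l0 l1). split. { apply Rmin_glb_lt; lra. }
    intros v Hv. destruct (Nat.eq_dec v N).
    + subst. assert (Rmin l0 l1 * g N <= l1 * g N) by
        (apply Rmult_le_compat_r; [lra| apply Rmin_r]).
      assert (l1 * g N < f N).
      { unfold l1. apply Rmult_lt_reg_r with (g N + 1); [lra|].
        unfold Rdiv. replace (f N * / (g N + 1) * g N * (g N + 1)) with (f N * g N)
          by (field; lra). nra. }
      lra.
    + assert (g v >= 0) by (apply Rle_ge, Hg; lia).
      assert (Rmin l0 l1 * g v <= l0 * g v) by
        (apply Rmult_le_compat_r; [lra| apply Rmin_l]).
      specialize (Hl v ltac:(lia)). lra.
Qed.



Definition zz (n : nat) (p q : nat -> nat -> R) v := join_config n p q v.
Definition HH d n p q v := hat d (zz n p q v).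
Definition UU d (A : nat -> nat -> R) n p q v a := sumR (S d) (fun b => A a b * HH d n p q v b).
Definition QQ d A n p q v := qform d A (HH d n p q v).
Definition WW d A n p q v := sumR (S d) (fun a => UU d A n p q v a * UU d A n p q v a).
Definition sg (n v : nat) : R := if v <? n then 1 else -1.
Definition B1 d A n p q l v a := HH d n p q v a - sg n v * l * UU d A n p q v a.
Definition B2 d A n p q l v a := l * UU d A n p q v a.
Definition gam d A n p q l v := sqrt (2 * l * (sg n v * QQ d A n p q v - l * WW d A n p q v)).
Definition cc (b : bool) (n v : nat) : nat :=
  if b then (if v <? n then 0%nat else 1%nat) else S (S v).
Definition ext d A n p q l b v s := if s =? cc b n v then gam d A n p q l v else 0.
Definition xx d A n p q l b v t :=
  if t <? S d then B1 d A n p q l v t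
  else if (t - S d) <? S d then B2 d A n p q l v (t - S d)
  else ext d A n p q l b v (t - S d - S d).

Lemma dist_xx d A n p q l b N v w :
  dist2 (S d + (S d + N)) (xx d A n p q l b v) (xx d A n p q l b w) =
  sumR (S d) (fun a => (B1 d A n p q l v a - B1 d A n p q l w a) * (B1 d A n p q l v a - B1 d A n p q l w a))
  + sumR (S d) (fun a => (B2 d A n p q l v a - B2 d A n p q l w a) * (B2 d A n p q l v a - B2 d A n p q l w a))
  + sumR N (fun s => (ext d A n p q l b v s - ext d A n p q l b w s) * (ext d A n p q l b v s - ext d A n p q l b w s)).
Proof.
  unfold dist2. rewrite !sumR_split. rewrite Rplus_assoc. f_equal; [|f_equal].
  - apply sumR_ext. intros t Ht. unfold xx. rewrite (proj2 (Nat.ltb_lt t (S d))) by lia. reflexivity.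
  - apply sumR_ext. intros t Ht. unfold xx.
    rewrite (proj2 (Nat.ltb_ge (S d + t) (S d))) by lia.
    replace (S d + t - S d)%nat with t by lia.
    rewrite (proj2 (Nat.ltb_lt t (S d))) by lia. reflexivity.
  - apply sumR_ext. intros t Ht. unfold xx.
    rewrite (proj2 (Nat.ltb_ge (S d + (S d + t)) (S d))) by lia.
    replace (S d + (S d + t) - S d)%nat with (S d + t)%nat by lia.
    rewrite (proj2 (Nat.ltb_ge (S d + t) (S d))) by lia.
    replace (S d + t - S d)%nat with t by lia. reflexivity.
Qed.


Lemma dist_hat d x y :
  dist2 d x y = sumR (S d) (fun a => (hat d x a - hat d y a) * (hat d x a - hat d y a)).
Proof.
  unfold dist2. simpl. replace (hat d x d) with 1 by (unfold hat; rewrite Nat.ltb_irrefl; reflexivity). replace (hat d y d) with 1 by (unfold hat; rewrite Nat.ltb_irrefl; reflexivity).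
  replace ((1 - 1) * (1 - 1)) with 0 by ring. rewrite Rplus_0_r.
  apply sumR_ext. intros t Ht. unfold hat. rewrite (proj2 (Nat.ltb_lt t d)) by lia. reflexivity.
Qed.

Lemma edge_ok d A n p q l b m v w :
  (forall a c, (a <= d)%nat -> (c <= d)%nat -> A a c = A c a) ->
  (forall u, (u < n + m)%nat -> 0 <= 2 * l * (sg n u * QQ d A n p q u - l * WW d A n p q u)) ->
  (v < n)%nat -> (n <= w < n + m)%nat ->
  dist2 (S d + (S d + (n + m + 2))) (xx d A n p q l b v) (xx d A n p q l b w)
  = dist2 d (zz n p q v) (zz n p q w).
Proof.
  intros Hs Hg Hv Hw.
  rewrite dist_xx. unfold ext.
  rewrite sumR_ind2 by (unfold cc; destruct b; [destruct (_ <? _)|]; lia).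
  assert (Hc : (cc b n v =? cc b n w) = false).
  { apply Nat.eqb_neq. unfold cc. destruct b.
    - rewrite (proj2 (Nat.ltb_lt v n)) by lia. rewrite (proj2 (Nat.ltb_ge w n)) by lia. lia.
    - lia. }
  rewrite Hc. unfold gam. rewrite !sqrt_sqrt by (apply Hg; lia).
  assert (sv : sg n v = 1) by (unfold sg; rewrite (proj2 (Nat.ltb_lt v n)) by lia; reflexivity).
  assert (sw : sg n w = -1) by (unfold sg; rewrite (proj2 (Nat.ltb_ge w n)) by lia; reflexivity).
  rewrite sv, sw.
  rewrite dist_hat. fold (HH d n p q v). fold (HH d n p q w).
  set (H := HH d n p q v). set (K := HH d n p q w).
  set (U := UU d A n p q v). set (V := UU d A n p q w).
  pose proof (block_ind (S d) H K U V l) as Hb.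
  assert (E1 : sumR (S d) (fun a => H a * V a) = sumR (S d) (fun a => K a * U a)).
  { unfold U, V, UU. apply bilin_sym. exact Hs. }
  assert (E2 : QQ d A n p q v = sumR (S d) (fun a => H a * U a)).
  { unfold QQ. rewrite qform_U. reflexivity. }
  assert (E3 : QQ d A n p q w = sumR (S d) (fun a => K a * V a)).
  { unfold QQ. rewrite qform_U. reflexivity. }
  rewrite E1 in Hb. rewrite E2, E3. unfold WW. fold U V.
  assert (E4 : sumR (S d) (fun a => (B1 d A n p q l v a - B1 d A n p q l w a) * (B1 d A n p q l v a - B1 d A n p q l w a))
     = sumR (S d) (fun a => (H a - l*U a - (K a + l*V a)) * (H a - l*U a - (K a + l*V a)))).
  { apply sumR_ext. intros. unfold B1. rewrite sv, sw. fold H K U V. ring. }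
  rewrite E4. unfold B2. fold U V. lra.
Qed.


Lemma cc_lt b n v N : (v < N)%nat -> (cc b n v < N + 2)%nat.
Proof. intros. unfold cc. destruct b; [destruct (v <? n)|]; lia. Qed.

Lemma same_side d A n p q l N v w :
  (v < N)%nat -> (w < N)%nat -> v <> w -> (v <? n) = (w <? n) ->
  dist2 (S d + (S d + (N + 2))) (xx d A n p q l true v) (xx d A n p q l true w)
  - dist2 (S d + (S d + (N + 2))) (xx d A n p q l false v) (xx d A n p q l false w)
  = - 2 * gam d A n p q l v * gam d A n p q l w.
Proof.
  intros Hv Hw Hvw Hs. rewrite !dist_xx. unfold ext.
  rewrite !sumR_ind2 by (apply cc_lt; lia).
  assert (E1 : (cc true n v =? cc true n w) = true).
  { apply Nat.eqb_eq. unfold cc. rewrite Hs. reflexivity. }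
  assert (E2 : (cc false n v =? cc false n w) = false).
  { apply Nat.eqb_neq. unfold cc. lia. }
  rewrite E1, E2. ring.
Qed.

Lemma qform_ext d A x y : (forall t, x t = y t) -> qform d A x = qform d A y.
Proof.
  intros H. unfold qform. apply sumR_ext. intros. apply sumR_ext. intros. rewrite !H. reflexivity.
Qed.

Theorem mainTheorem1 (d n m : nat) (p q : nat -> nat -> R)
  (hdim : exists k : nat, (k + 2 <= n + m)%nat /\
            affine_span_dim_le d (n + m) (join_config n p q) k)
  (hsep : strictly_separated_by_quadric d n m p q) :
  ~ bipartite_universally_rigid d n m p q.
Proof.
  intros Hr. destruct hsep as [A [Hs [Hp Hq]]]. destruct hdim as [k [Hk Haff]].
  assert (Hf : forall u, (u < n + m)%nat -> 0 < sg n u * QQ d A n p q u).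
  { intros u Hu. unfold sg, QQ, HH, zz, join_config. destruct (u <? n) eqn:E.
    - apply Nat.ltb_lt in E. specialize (Hp u E). lra.
    - apply Nat.ltb_ge in E. specialize (Hq (u - n)%nat ltac:(lia)). lra. }
  assert (Hg0 : forall u, (u < n + m)%nat -> 0 <= WW d A n p q u).
  { intros u _. unfold WW. apply sumR_nonneg. intros. nra. }
  destruct (lam_exists (n + m) _ _ Hf Hg0) as [l [Hl Hlam]].
  assert (Hg : forall u, (u < n + m)%nat ->
     0 < 2 * l * (sg n u * QQ d A n p q u - l * WW d A n p q u)).
  { intros u Hu. specialize (Hlam u Hu). nra. }
  assert (Hgam : forall u, (u < n + m)%nat -> 0 < gam d A n p q l u).
  { intros u Hu. unfold gam. apply sqrt_lt_R0. apply Hg; auto. }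
  assert (Hedge : forall b, forall i j, (i < n + m)%nat -> (j < n + m)%nat -> Knm_edge n m i j ->
     dist2 (S d + (S d + (n + m + 2))) (xx d A n p q l b i) (xx d A n p q l b j)
     = dist2 d (join_config n p q i) (join_config n p q j)).
  { intros b i j Hi Hj [[E1 E2]|[E1 E2]].
    - apply edge_ok; auto. intros u Hu; apply Rlt_le, Hg; auto.
    - rewrite dist2_sym, (dist2_sym d). apply edge_ok; auto. intros u Hu; apply Rlt_le, Hg; auto. }
  assert (Hpair : exists v w, (v < n + m)%nat /\ (w < n + m)%nat /\ v <> w /\ (v <? n) = (w <? n)).
  { destruct (le_lt_dec 2 n).
    - exists 0%nat, 1%nat. rewrite (proj2 (Nat.ltb_lt 0 n)) by lia.
      rewrite (proj2 (Nat.ltb_lt 1 n)) by lia. repeat split; lia.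
    - destruct (le_lt_dec 2 m).
      + exists n, (S n). rewrite Nat.ltb_irrefl.
        rewrite (proj2 (Nat.ltb_ge (S n) n)) by lia. repeat split; lia.
      + exfalso. assert (n = 1%nat) by lia. assert (m = 1%nat) by lia.
        assert (k = 0%nat) by lia. subst.
        destruct Haff as [c [u Hu]].
        destruct (Hu 0%nat ltac:(lia)) as [a0 Ha0].
        destruct (Hu 1%nat ltac:(lia)) as [a1 Ha1].
        assert (Heq : qform d A (hat d (p 0%nat)) = qform d A (hat d (q 0%nat))).
        { apply qform_ext. intros t. unfold hat. destruct (t <? d) eqn:Et; auto.
          apply Nat.ltb_lt in Et. specialize (Ha0 t Et). specialize (Ha1 t Et).
          unfold join_config in Ha0, Ha1. simpl in Ha0, Ha1. lra. }
        specialize (Hp 0%nat ltac:(lia)). specialize (Hq 0%nat ltac:(lia)). lra. }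
  destruct Hpair as [v [w [Hv [Hw [Hvw Hsd]]]]].
  pose proof (Hr _ _ (Hedge true) v w Hv Hw) as H1.
  pose proof (Hr _ _ (Hedge false) v w Hv Hw) as H2.
  pose proof (same_side d A n p q l (n + m) v w Hv Hw Hvw Hsd) as H3.
  specialize (Hgam v Hv) as G1. specialize (Hgam w Hw) as G2.
  rewrite H1, H2 in H3. nra.
Qed.
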